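(* Let $\widetilde{\Sigma}=\widetilde{\Sigma}_1\uplus\cdots\uplus\widetilde{\Sigma}_n$ with pairwise disjoint visibly pushdown alphabets $\widetilde{\Sigma}_i$. If $\prec$ is a visibly pushdown contextual order on $\widetilde{\Sigma}$ and $P_1\subseteq\widetilde{\Sigma}_1^*,\ldots,P_n\subseteq\widetilde{\Sigma}_n^*$ are well-matched visibly pushdown languages, then $\mathrm{red}_\prec(P_1\bowtie\cdots\bowtie P_n)$ is a visibly pushdown language.
   Context: A visibly pushdown (VP) alphabet is a finite alphabet partitioned into calls, returns and internals; $\widetilde{\Sigma}$ has as calls/returns/internals the unions. Calls and returns in a word are matched like opening and closing parentheses (internals ignored); unmatched ones are pending; a word is well-matched if none are pending. A visibly pushdown automaton (VPA) is a pushdown automaton with bottom symbol $\bot$ that pushes one non-$\bot$ symbol on each call, pops the top on each return (reading $\bot$ on empty stack without removing it), and leaves the stack unchanged on internals; visibly pushdown languages are those accepted by VPAs; deterministic = one initial state and at most one transition per configuration and letter; complete = at least one. Shuffle: $P_1\parallel\cdots\parallel P_n=\{w\in\widetilde{\Sigma}^*:\Pi_{\widetilde{\Sigma}_i}(w)\in P_i\ \forall i\}$, $\Pi_{\widetilde{\Sigma}_i}$ erasing letters outside $\widetilde{\Sigma}_i$. A word is well-nested if every matched call–return pair consists of letters from the same $\widetilde{\Sigma}_k$; $P_1\bowtie\cdots\bowtie P_n$ is the set of well-nested words of $P_1\parallel\cdots\parallel P_n$. $\mathbb{I}=\{(a,b):a\in\widetilde{\Sigma}_i,b\in\widetilde{\Sigma}_j,i\ne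 j\}$, $\equiv_{\mathbb{I}}$ the least reflexive transitive relation with $uabv\equiv_{\mathbb{I}}ubav$ for $(a,b)\in\mathbb{I}$. A contextual order is a map $\prec$ from $\widetilde{\Sigma}^*$ to strict total orders on $\widetilde{\Sigma}$; it induces $\preceq$: $\sigma\preceq\rho$ iff $\sigma$ is a prefix of $\rho$ or $\sigma=\alpha a\beta$, $\rho=\alpha b\gamma$ with $a\prec_\alpha b$. $\mathrm{red}_\prec(L)=\{w\in L:\forall u\in L,(u\equiv_{\mathbb{I}}w\wedge u\preceq w)\Rightarrow u=w\}$. $\prec$ is visibly pushdown if there is a complete deterministic VPA $A$ over $\widetilde{\Sigma}$ and a map $\mathsf{ord}$ from its states to strict total orders on $\widetilde{\Sigma}$ with $\prec_w=\mathsf{ord}(q)$, $q$ the state reached by $A$ after reading $w$. *)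

(* Defs.v *)
From mathcomp Require Import all_boot.
From Stdlib Require Import Relations.

Set Implicit Arguments.
Unset Strict Implicit.
Unset Printing Implicit Defensive.

Inductive vkind := Call | Ret | Int.

Section VP.
Variable Sigma : finType.
Variable kind : Sigma -> vkind.

Fixpoint bal_aux (d : nat) (w : seq Sigma) : bool :=
  match w with
  | [::] => d == 0
  | a :: w' =>
      match kind a with
      | Call => bal_aux d.+1 w'
      | Ret => if d is d'.+1 then bal_aux d' w' else false
      | Int => bal_aux d w'
      end
  end.

Definition balanced (w : seq Sigma) : bool := bal_aux 0 w.

(* A call occurrence a and a return occurrence b in w = u a v b y are matched
   iff a is a call, b is a return, and the infix v strictly between them is
   balanced (i.e. matched like parentheses, internals ignored). *)

Definition well_matched (w : seq Sigma) : Prop :=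
  forall u a x, w = u ++ a :: x ->
    (kind a = Call -> exists v b y, x = v ++ b :: y /\ kind b = Ret /\ balanced v) /\
    (kind a = Ret -> exists y c v, u = y ++ c :: v /\ kind c = Call /\ balanced v).

(* Stack symbols are drawn from gam (non-bottom symbols); the bottom symbol is
   represented by [None] / the empty stack. *)
Record vpa := VPA {
  vst : finType;
  vgam : finType;
  vinit : pred vst;
  vfinal : pred vst;
  dcall : vst -> Sigma -> vst -> vgam -> bool;
  dret : vst -> Sigma -> option vgam -> vst -> bool; (* None = reading bottom *)
  dint : vst -> Sigma -> vst -> bool
}.

Arguments vinit : clear implicits.
Arguments vfinal : clear implicits.

Definition config (A : vpa) := (vst A * seq (vgam A))%type.

(* one step of A on a letter (stack top is the head of the list) *)
Inductive vstep (A : vpa) : config A -> Sigma -> config A -> Prop :=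
| StepCall q a q' g s :
    kind a = Call -> dcall q a q' g -> vstep (q, s) a (q', g :: s)
| StepRet q a q' g s :
    kind a = Ret -> dret q a (Some g) q' -> vstep (q, g :: s) a (q', s)
| StepRetBot q a q' :
    kind a = Ret -> dret q a None q' -> vstep (q, [::]) a (q', [::])
| StepInt q a q' s :
    kind a = Int -> dint q a q' -> vstep (q, s) a (q', s).

Inductive vrun (A : vpa) : config A -> seq Sigma -> config A -> Prop :=
| RunNil c : vrun c [::] c
| RunCons c a c' w c'' : vstep c a c' -> vrun c' w c'' -> vrun c (a :: w) c''.

Definition vaccepts (A : vpa) (w : seq Sigma) : Prop :=
  exists q0 c, vinit A q0 /\ vrun (q0, [::]) w c /\ vfinal A c.1.

Definition is_vpl (L : seq Sigma -> Prop) : Prop :=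
  exists A : vpa, forall w, L w <-> vaccepts A w.

Definition vdeterministic (A : vpa) : Prop :=
  (exists q0, forall q, vinit A q <-> q = q0) /\
  (forall (c : config A) a c1 c2, vstep c a c1 -> vstep c a c2 -> c1 = c2).

Definition vcomplete (A : vpa) : Prop :=
  (exists q0, vinit A q0) /\ (forall (c : config A) a, exists c', vstep c a c').

Definition strict_total (r : rel Sigma) : Prop :=
  (forall a, ~~ r a a) /\
  (forall a b c, r a b -> r b c -> r a c) /\
  (forall a b, a != b -> r a b || r b a).

Definition contextual_order (prec : seq Sigma -> rel Sigma) : Prop :=
  forall w, strict_total (prec w).

Definition vp_contextual_order (prec : seq Sigma -> rel Sigma) : Prop :=
  contextual_order prec /\
  exists (A : vpa) (ord : vst A -> rel Sigma),
    vdeterministic A /\ vcomplete A /\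
    (forall q, strict_total (ord q)) /\
    (forall w q0 (c : config A), vinit A q0 -> vrun (q0, [::]) w c -> prec w = ord c.1).

Definition word_le (prec : seq Sigma -> rel Sigma) (s r : seq Sigma) : Prop :=
  prefix s r \/
  exists al a be b ga, s = al ++ a :: be /\ r = al ++ b :: ga /\ prec al a b.

Variable n : nat.
Variable comp : Sigma -> 'I_n.  (* a \in Sigma~_i  iff  comp a = i *)

Definition proj (i : 'I_n) (w : seq Sigma) : seq Sigma :=
  filter (fun a => comp a == i) w.

Definition shuffle (P : 'I_n -> seq Sigma -> Prop) (w : seq Sigma) : Prop :=
  forall i, P i (proj i w).

Definition well_nested (w : seq Sigma) : Prop :=
  forall u a v b y, w = u ++ a :: v ++ b :: y ->
    kind a = Call -> kind b = Ret -> balanced v -> comp a = comp b.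

Definition bowtie (P : 'I_n -> seq Sigma -> Prop) (w : seq Sigma) : Prop :=
  shuffle P w /\ well_nested w.

Inductive swap_step : seq Sigma -> seq Sigma -> Prop :=
| Swap u a b v : comp a != comp b -> swap_step (u ++ a :: b :: v) (u ++ b :: a :: v).

Definition equivI : seq Sigma -> seq Sigma -> Prop := clos_refl_trans _ swap_step.

Definition red (prec : seq Sigma -> rel Sigma) (L : seq Sigma -> Prop)
    (w : seq Sigma) : Prop :=
  L w /\ forall u, L u -> equivI u w -> word_le prec u w -> u = w.

End VP.

(* Main.v *)
Require Import Defs.
From Stdlib Require Import Relation_Operators ClassicalEpsilon.
From mathcomp Require Import all_boot zify.

Set Implicit Arguments.
Unset Strict Implicit.
Unset Printing Implicit Defensive.

Lemma catl_inj (T : Type) (s a b : seq T) : s ++ a = s ++ b -> a = b.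
Proof. by elim: s => //= x s IH [/IH]. Qed.

Lemma filter_nil (T : Type) (p : pred T) s : all (fun c => ~~ p c) s -> filter p s = [::].
Proof. by elim: s => //= c s IH /andP [/negbTE -> /IH]. Qed.

Lemma filter_nil_all (T : Type) (p : pred T) s : filter p s = [::] -> all (fun c => ~~ p c) s.
Proof. by elim: s => //= c s IH; case: (p c) => //= /IH. Qed.

Lemma filter_splitl (T : Type) (p : pred T) x y z :
  filter p x = y ++ z -> exists x0 x1, [/\ x = x0 ++ x1, filter p x0 = y & filter p x1 = z].
Proof.
elim: x y => [|a x IH] y /=.
  by case: y => //= <-; exists [::], [::].
case: ifP => Pa.
  case: y => [|b y] /=.
    by move=> H; exists [::], (a :: x); rewrite /= Pa.
  case=> <- /IH [x0 [x1 [-> H1 H2]]]; exists (a :: x0), x1; by rewrite /= Pa H1.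
move/IH => [x0 [x1 [-> H1 H2]]]; exists (a :: x0), x1; by rewrite /= Pa H1.
Qed.

Lemma filter_cons_split (T : Type) (p : pred T) x c z :
  filter p x = c :: z -> exists x0 x1, [/\ x = x0 ++ c :: x1, filter p x0 = [::], filter p x1 = z & p c].
Proof.
elim: x => [|a x IH] //=.
case: ifP => Pa.
  by case=> <- <-; exists [::], x.
move/IH => [x0 [x1 [-> H1 H2 H3]]]; exists (a :: x0), x1; by rewrite /= Pa H1.
Qed.

Lemma filter_split_elem (T : Type) (p : pred T) x y c z :
  filter p x = y ++ c :: z -> exists x0 x1, [/\ x = x0 ++ c :: x1, filter p x0 = y, filter p x1 = z & p c].
Proof.
move=> H; have [x0 [x1 [-> H0 H1]]] := filter_splitl H.
have [a0 [a1 [-> Ha0 Ha1 Pc]]] := filter_cons_split H1.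
exists (x0 ++ a0), a1; split => //; first by rewrite catA.
by rewrite filter_cat H0 Ha0 cats0.
Qed.

Section Comb.
Variables (Sigma : finType) (kind : Sigma -> vkind) (n : nat) (comp : Sigma -> 'I_n).

Definition cstep (s : seq 'I_n) (a : Sigma) : option (seq 'I_n) :=
  match kind a with
  | Call => Some (comp a :: s)
  | Ret => if s is k :: s' then (if k == comp a then Some s' else None) else None
  | Int => Some s
  end.

Fixpoint runc (s : seq 'I_n) (w : seq Sigma) : option (seq 'I_n) :=
  match w with
  | [::] => Some s
  | a :: w' => if cstep s a is Some s' then runc s' w' else None
  end.

Lemma runc_cat s x y : runc s (x ++ y) = if runc s x is Some s' then runc s' y else None.
Proof. by elim: x s => [|a x IH] s //=; case: (cstep s a). Qed.

Lemma runc_rcons s x a : runc s (rcons x a) = if runc s x is Some s' then cstep s' a else None.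
Proof.
rewrite -cats1 runc_cat; case: (runc s x) => //= s'; by case: (cstep s' a).
Qed.

Lemma runc_pre s x y : runc s (x ++ y) <> None -> exists s', runc s x = Some s'.
Proof. rewrite runc_cat; case: (runc s x) => // s' _; by exists s'. Qed.

Lemma runc_int s x a y : kind a = Int -> runc s (x ++ a :: y) = runc s (x ++ y).
Proof. by move=> Ka; rewrite !runc_cat; case: (runc s x) => //= s'; rewrite /cstep Ka. Qed.

Fixpoint dep (d : nat) (w : seq Sigma) : option nat :=
  match w with
  | [::] => Some d
  | a :: w' => match kind a with
               | Call => dep d.+1 w'
               | Ret => if d is d'.+1 then dep d' w' else None
               | Int => dep d w'
               end
  end.

Lemma bal_dep d w : bal_aux kind d w = (dep d w == Some 0).
Proof.
elim: w d => [|a w IH] d /=; first by case: d.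
by case: (kind a); rewrite ?IH //; case: d.
Qed.

Lemma dep_cat d x y : dep d (x ++ y) = if dep d x is Some e then dep e y else None.
Proof.
elim: x d => [|a x IH] d //=.
by case: (kind a); rewrite ?IH //; case: d => [|d] //=.
Qed.

Lemma dep_shift w : forall d e k, dep d w = Some e -> dep (d + k) w = Some (e + k).
Proof.
elim: w => [|a w IH] d e k /=; first by case=> ->.
case: (kind a).
- by move=> H; rewrite -addSn; apply: IH.
- by case: d => // d H; apply: IH.
- by move=> H; apply: IH.
Qed.

Definition isC a := if kind a is Call then true else false.
Definition isR a := if kind a is Ret then true else false.

Lemma dep_count w : forall d e, dep d w = Some e -> e + count isR w = d + count isC w.
Proof.
elim: w => [|a w IH] d e /=; first by case=> ->.
rewrite /isC /isR; case: (kind a).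
- move/IH; rewrite /isC /isR; lia.
- case: d => // d /IH; rewrite /isC /isR; lia.
- move/IH; rewrite /isC /isR; lia.
Qed.

Lemma runc_bal_gen v : forall d ρ μ τ, dep d v = Some 0 -> size ρ = d ->
  runc (ρ ++ μ) v = Some τ -> τ = μ.
Proof.
elim: v => [|a v IH] d ρ μ τ /=.
  by move=> [->]; case: ρ => //= _ [->].
rewrite /cstep; case: (kind a).
- by move=> Hd Hs; apply: (IH d.+1 (comp a :: ρ)) => //=; rewrite Hs.
- case: d => // d Hd; case: ρ => [|k ρ] /= // [Hs]; case: ifP => // _ H; exact: (IH d ρ μ τ Hd Hs H).
- exact: IH.
Qed.

Lemma runc_bal v μ τ : balanced kind v -> runc μ v = Some τ -> τ = μ.
Proof. rewrite /balanced bal_dep => /eqP H; exact: (runc_bal_gen H (ρ := [::])). Qed.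

Lemma runc_wn s u : runc s u <> None -> well_nested kind comp u.
Proof.
move=> H x a v b y Eu Ka Kb Bv; subst u.
move: H; rewrite runc_cat; case: (runc s x) => // σ /=; rewrite {1}/cstep Ka.
rewrite runc_cat; case E2: (runc (comp a :: σ) v) => [τ|] //.
rewrite (runc_bal Bv E2) /= /cstep Kb; by case: eqP.
Qed.

Lemma topdec x : forall k σ, runc [::] x = Some (k :: σ) ->
  exists x1 c v, [/\ x = x1 ++ c :: v, kind c = Call, comp c = k, balanced kind v
                   & runc [::] x1 = Some σ].
Proof.
have [m] := ubnP (size x); elim: m x => // m IH x Hx.
case/lastP: x Hx => [|x y] Hx k σ //.
rewrite size_rcons in Hx.
rewrite runc_rcons; case E: (runc [::] x) => [τ|] //.
rewrite /cstep; case Ky: (kind y).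
- by case=> <- <-; exists x, y, [::]; rewrite cats1.
- case: τ E => // j τ E; case: ifP => // /eqP Ej [Eτ]; subst τ.
  have [x1 [c1 [v1 [Ex Kc1 Cc1 Bv1 R1]]]] := IH x Hx _ _ E.
  have Hx1 : size x1 < m by move: Hx; rewrite Ex size_cat /=; lia.
  have [x2 [c [v2 [Ex1 Kc Cc Bv2 R2]]]] := IH x1 Hx1 _ _ R1.
  exists x2, c, (v2 ++ c1 :: rcons v1 y); split => //.
    by rewrite Ex Ex1 -!cats1 -!catA.

  move: Bv1 Bv2; rewrite /balanced !bal_dep => /eqP B1 /eqP B2.
  rewrite dep_cat B2 /= Kc1 -cats1 dep_cat (dep_shift 1 B1) /= Ky //.
- case=> Eτ; subst τ.
  have [x1 [c [v [Ex Kc Cc Bv R1]]]] := IH x Hx _ _ E.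
  exists x1, c, (rcons v y); split => //.
    by rewrite Ex rcons_cat.
  move: Bv; rewrite /balanced !bal_dep => /eqP B.
  by rewrite -cats1 dep_cat B /= Ky.
Qed.

Definition proj' (j : 'I_n) := filter (fun a => comp a == j).

Lemma count_run j x : forall s t, runc s x = Some t ->
  count_mem j t + count isR (proj comp j x) = count_mem j s + count isC (proj comp j x).
Proof.
elim: x => [|a x IH] s t /=; first by case=> ->.
rewrite /cstep /proj /=; case Ka: (kind a).
- move/IH; rewrite /proj /=; case: eqP => /= E; rewrite /isC /isR ?Ka; lia.
- case: s => // k s; case: ifP => // /eqP Ek /IH; rewrite /proj /=; subst k.
  case: eqP => /= E; rewrite /isC /isR ?Ka; lia.
- move/IH; rewrite /proj /=; case: eqP => /= E; rewrite /isC /isR ?Ka; lia.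
Qed.

Lemma fail_point s u : runc s u = None ->
  exists x b y σ, [/\ u = x ++ b :: y, runc s x = Some σ & cstep σ b = None].
Proof.
elim: u s => [|a u IH] s //=.
case E: (cstep s a) => [s'|].
  move/IH => [x [b [y [σ [-> R C]]]]]; exists (a :: x), b, y, σ; by rewrite /= E.
move=> _; by exists [::], a, u, s.
Qed.


Lemma equivI_proj u w : equivI comp u w -> forall i, proj comp i u = proj comp i w.
Proof.
elim => [x y [u0 a b v Hab]| x | x y z _ H1 _ H2] i //; last by rewrite H1 H2.
rewrite /proj !filter_cat /=.
case: (comp a == i) /eqP => Ha; case: (comp b == i) /eqP => Hb //.
by move: Hab; rewrite Ha Hb eqxx.
Qed.

Lemma equivI_size u w : equivI comp u w -> size u = size w.
Proof.
elim => [x y [u0 a b v Hab]| x | x y z _ H1 _ H2] //; last by rewrite H1 H2.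
by rewrite !size_cat.
Qed.

Lemma equivI_cons c x y : equivI comp x y -> equivI comp (c :: x) (c :: y).
Proof.
elim => [x0 y0 [u a b v H]|x0|x0 y0 z0 _ H1 _ H2].
- by apply: rt_step; rewrite -!cat_cons; apply: Swap.
- exact: rt_refl.
- exact: rt_trans H1 H2.
Qed.

Lemma bubble a w1 w2 : all (fun c => comp c != comp a) w1 ->
  equivI comp (a :: w1 ++ w2) (w1 ++ a :: w2).
Proof.
elim: w1 => [|c w1 IH] /=; first by move=> _; apply: rt_refl.
case/andP => Hc Hall.
apply: rt_trans (equivI_cons c (IH Hall)).
apply: rt_step.
have := @Swap _ _ comp [::] a c (w1 ++ w2); rewrite eq_sym; by apply.
Qed.

Lemma proj_equivI u : forall w, (forall i, proj comp i u = proj comp i w) -> equivI comp u w.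
Proof.
elim: u => [|a u IH] w H.
  case: w H => [|b w] H; first by apply: rt_refl.
  by have := H (comp b); rewrite /proj /= eqxx.
have := H (comp a); rewrite /proj /= eqxx => /esym Hw.
have [w1 [w2 [Ew Hw1 Hw2 _]]] := filter_cons_split Hw; subst w.
have Hall := filter_nil_all Hw1.
apply: rt_trans (equivI_cons a (IH (w1 ++ w2) _)) (bubble _ Hall).
move=> i; have := H i; rewrite /proj /= !filter_cat /=.
case: eqP => [<-|Hi] //.
by rewrite Hw1 Hw2.
Qed.

Variable P : 'I_n -> seq Sigma -> Prop.
Hypothesis HPwm : forall i w, P i w -> well_matched kind w.

Lemma L_valid w : bowtie kind comp P w -> runc [::] w <> None.
Proof.
case=> Hsh Hwn Hnone.
have [x [b [y [σ [Ew Rx Cb]]]]] := fail_point Hnone.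
move: Cb; rewrite /cstep; case Kb: (kind b) => //.
case: σ Rx => [|k σ] Rx.
  move=> _; set j := comp b.
  have := HPwm (Hsh j); rewrite Ew /proj filter_cat /= eqxx.
  move/(_ (filter (fun a => comp a == j) x) b (filter (fun a => comp a == j) y) erefl).
  case=> _ /(_ Kb) [y0 [c [v [Ex [Kc Bv]]]]].
  have [x0 [x1 [Ex' Fx0 Fx1 _]]] := filter_split_elem Ex.
  have Hc1 : isC c = true by rewrite /isC Kc.
  have Hc2 : isR c = false by rewrite /isR Kc.
  have Cx := count_run j Rx; rewrite /proj Ex !count_cat /= Hc1 Hc2 in Cx.
  move: Bv; rewrite /balanced bal_dep => /eqP /dep_count; rewrite /= add0n => Cv.
  rewrite Ex' in Rx.
  have [σ0 R0] : exists s', runc [::] x0 = Some s' by apply: (runc_pre (y := c :: x1)); rewrite Rx.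
  have := count_run j R0; rewrite /proj Fx0 /= => C0.
  lia.
case: ifP => // /negbT Hk _.
have [x1 [c [v [Ex Kc Cc Bv _]]]] := topdec Rx.
have := Hwn x1 c v b y; rewrite Ew Ex -catA /=.
move=> /(_ erefl Kc Kb Bv) Hcb.
by move: Hk; rewrite -Cc Hcb eqxx.
Qed.

Lemma valid_L w : (forall i, P i (proj comp i w)) -> runc [::] w <> None ->
  bowtie kind comp P w.
Proof. by move=> H1 H2; split => //; apply: runc_wn H2. Qed.

Lemma filt_same j s : filter (fun c => comp c == j) (filter (fun c => comp c != j) s) = [::].
Proof.
elim: s => //= c s IH; case: (eqVneq (comp c) j) => H /=; first exact: IH.
by rewrite (negbTE H) IH.
Qed.

Lemma filt_disj i j s : i != j -> filter (fun c => comp c == i) (filter (fun c => comp c == j) s) = [::].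
Proof.
move=> Hij; elim: s => //= c s IH; case: (eqVneq (comp c) j) => H /=; last exact: IH.
by rewrite H eq_sym (negbTE Hij) IH.
Qed.

Lemma filt_sub i j s : i != j ->
  filter (fun c => comp c == i) (filter (fun c => comp c != j) s) = filter (fun c => comp c == i) s.
Proof.
move=> Hij; elim: s => //= c s IH; case: (eqVneq (comp c) j) => H /=.
  by rewrite H eq_sym (negbTE Hij) IH.
by case: ifP => _; rewrite IH.
Qed.

Lemma nodip j x : forall ρ0 μ τ d, dep d (proj comp j x) = Some 0 -> count_mem j ρ0 = d ->
  runc (ρ0 ++ j :: μ) x = Some τ ->
  exists ρ, [/\ τ = ρ ++ j :: μ, count_mem j ρ = 0 &
    forall μ', runc (filter (fun k => k != j) ρ0 ++ μ') (filter (fun a => comp a != j) x)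
               = Some (filter (fun k => k != j) ρ ++ μ')].
Proof.
elim: x => [|a x IH] ρ0 μ τ d /=.
  move=> [Hd] H0 [<-]; exists ρ0; split => //; by rewrite H0 Hd.
rewrite /proj /=; case: (boolP (comp a == j)) => Hj.
  move/eqP: Hj => Hj.
  rewrite /= /cstep; case Ka: (kind a).
  - move=> Hd Hc; rewrite Hj => R.
    have Hc' : count_mem j (j :: ρ0) = d.+1 by rewrite /= eqxx Hc.
    have [ρ [E C H]] := IH (j :: ρ0) μ τ d.+1 Hd Hc' R.
    exists ρ; split => // μ'; by rewrite -H /= eqxx.
  - case: d => // d Hd; case: ρ0 => [|k ρ0] //= Hc.
    case: ifP => // /eqP Ek R; subst k.
    have Hc' : count_mem j ρ0 = d by move: Hc; rewrite Hj eqxx /= => [[]].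
    have [ρ [E C H]] := IH ρ0 μ τ d Hd Hc' R.
    exists ρ; split => // μ'; by rewrite -H Hj eqxx.
  - move=> Hd Hc R; have [ρ [E C H]] := IH ρ0 μ τ d Hd Hc R.
    exists ρ; split => // μ'; by rewrite -H.
rewrite /= /cstep; case Ka: (kind a).
- move=> Hd Hc R.
  have Hc' : count_mem j (comp a :: ρ0) = d by rewrite /= (negbTE Hj) Hc.
  have [ρ [E C H]] := IH (comp a :: ρ0) μ τ d Hd Hc' R.
  exists ρ; split => // μ'; by rewrite -H /= Hj.
- case: ρ0 => [|k ρ0] /=.
    by rewrite eq_sym (negbTE Hj).
  move=> Hd Hc; case: ifP => // /eqP Ek R; subst k.
  have Hc' : count_mem j ρ0 = d by move: Hc; rewrite (negbTE Hj).
  have [ρ [E C H]] := IH ρ0 μ τ d Hd Hc' R.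
  exists ρ; split => // μ'; by rewrite -H /= Hj /= eqxx.
- move=> Hd Hc R; have [ρ [E C H]] := IH ρ0 μ τ d Hd Hc R.
  exists ρ; split => // μ'; by rewrite -H.
Qed.

Lemma jblock j v : forall d μ, all (fun a => comp a == j) v -> dep d v = Some 0 ->
  runc (nseq d j ++ μ) v = Some μ.
Proof.
elim: v => [|a v IH] d μ /=; first by move=> _ [->].
case/andP => /eqP Ha Hall; rewrite /cstep; case: (kind a).
- by move=> Hd; rewrite Ha; exact: (IH d.+1).
- by case: d => // d Hd /=; rewrite Ha eqxx; exact: IH.
- by move=> Hd; exact: IH.
Qed.

Lemma pop_frame j ρ μ r : count_mem j ρ = 0 -> kind r = Ret -> comp r = j ->
  cstep (ρ ++ j :: μ) r <> None -> ρ = [::].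
Proof.
case: ρ => // k ρ /=; rewrite /cstep => Hc Kr Cr; rewrite Kr.
case: eqP => // Ek _; by move: Hc; rewrite Ek Cr eqxx.
Qed.

Variable prec : seq Sigma -> rel Sigma.

Definition topc (α : seq Sigma) : option 'I_n :=
  if runc [::] α is Some (k :: _) then Some k else None.
Definition topok α y k := if kind y is Ret then topc α == Some k else true.

Lemma move_front α z a δ : bowtie kind comp P (α ++ z ++ a :: δ) ->
  all (fun c => comp c != comp a) z -> topok α a (comp a) ->
  exists γ', bowtie kind comp P (α ++ a :: γ') /\
    forall i, proj comp i (α ++ a :: γ') = proj comp i (α ++ z ++ a :: δ).
Proof.
move=> Lw Hz Htop; have [Hsh _] := Lw; have Vw := L_valid Lw.
move: Vw; rewrite runc_cat; case Eα: (runc [::] α) => [σ|] // Vw.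
have Pshift : forall γ', (forall i, proj comp i (α ++ a :: γ') = proj comp i (α ++ z ++ a :: δ)) ->
    runc σ (a :: γ') <> None ->
    bowtie kind comp P (α ++ a :: γ') /\
    forall i, proj comp i (α ++ a :: γ') = proj comp i (α ++ z ++ a :: δ).
  move=> γ' Hp Hr; split => //; apply: valid_L.
    by move=> i; rewrite Hp; exact: Hsh.
  by rewrite runc_cat Eα.
have Hzp : forall i, proj comp i (α ++ a :: z ++ δ) = proj comp i (α ++ z ++ a :: δ).
  move=> i; rewrite /proj !filter_cat /= !filter_cat; case: eqP => Hi //.
  by rewrite -Hi (filter_nil Hz).
case Ka: (kind a).
- have Hwm := HPwm (Hsh (comp a)).
  have Epj : proj comp (comp a) (α ++ z ++ a :: δ) =
             proj comp (comp a) α ++ a :: proj comp (comp a) δ.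
    by rewrite /proj !filter_cat /= (filter_nil Hz) eqxx.
  rewrite Epj in Hwm; have [H1 _] := Hwm _ _ _ erefl.
  have [v [r [y0 [Ed [Kr Bv]]]]] := H1 Ka.
  have [t1 [t2 [Eδ Ft1 Ft2 Cr]]] := filter_split_elem Ed.
  subst δ; move/eqP: Cr => Cr.
  have Bv' : dep 0 v = Some 0 by move: Bv; rewrite /balanced bal_dep => /eqP.
  exists (v ++ r :: z ++ filter (fun c => comp c != comp a) t1 ++ t2); apply: Pshift.
    move=> i; rewrite /proj !filter_cat /= -Ft1.
    case: (eqVneq i (comp a)) => [->|Hi].
      by rewrite ?filter_cat /= ?filter_cat /= Cr eqxx ?filter_cat /= filter_id (filter_nil Hz) filt_same.
    have Hi' : (comp a == i) = false by rewrite eq_sym (negbTE Hi).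
    by rewrite !filter_cat /= Cr Hi' !filter_cat filt_disj // filt_sub.
  rewrite runc_cat in Vw; case Ez: (runc σ z) Vw => [σz|] // Vw.
  move: Vw; rewrite /= {1}/cstep Ka runc_cat.
  case Et1: (runc (comp a :: σz) t1) => [τ|] // Vw.
  have Hd1 : dep 0 (proj comp (comp a) t1) = Some 0 by rewrite /proj Ft1.
  have [ρ [Eτ Cρ Hρ]] := @nodip (comp a) t1 [::] σz τ 0 Hd1 erefl Et1.
  subst τ.
  have Hc : cstep (ρ ++ comp a :: σz) r <> None by move: Vw => /=; case: cstep.
  have Eρ := pop_frame Cρ Kr Cr Hc; subst ρ.
  move: Vw; rewrite /= /cstep Kr Cr eqxx => Vw.
  have Av : all (fun c => comp c == comp a) v by rewrite -Ft1 filter_all.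
  have Jv := @jblock (comp a) v 0 (comp a :: σ) Av Bv'.
  rewrite /= Ka runc_cat Jv /= /cstep Kr Cr eqxx runc_cat Ez runc_cat.
  by have := Hρ σz; rewrite /= => ->.
- rewrite /topok Ka /topc Eα in Htop.
  case: σ Eα Vw Pshift Htop => [|k σ'] Eα Vw Pshift //= /eqP [Ek]; subst k.
  exists (z ++ δ); apply: Pshift => //.
  rewrite /= /cstep Ka eqxx.
  move: Vw; rewrite runc_cat; case Ez: (runc (comp a :: σ') z) => [τ|] // Vw.
  have Hd1 : dep 0 (proj comp (comp a) z) = Some 0 by rewrite /proj (filter_nil Hz).
  have [ρ [Eτ Cρ Hρ]] := @nodip (comp a) z [::] σ' τ 0 Hd1 erefl Ez.
  subst τ.
  have Hc : cstep (ρ ++ comp a :: σ') a <> None by move: Vw => /=; case: cstep.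
  have Eρ := pop_frame Cρ Ka erefl Hc; subst ρ.
  move: Vw; rewrite /= /cstep Ka eqxx => Vw.
  have := Hρ σ'; rewrite /= (all_filterP Hz) => Hz'.
  by rewrite runc_cat Hz'.
- exists (z ++ δ); apply: Pshift => //.
  by rewrite /= /cstep Ka; move: Vw; rewrite runc_int.
Qed.

Fixpoint FsR (r : seq Sigma) (k : 'I_n) : {set Sigma} :=
  match r with
  | [::] => set0
  | b :: r' => if comp b == k then set0
               else FsR r' k :|: [set y | prec (rev r') y b && topok (rev r') y k]
  end.

Definition Fs γ k := FsR (rev γ) k.

Lemma Fs_rcons γ b k : Fs (rcons γ b) k =
  if comp b == k then set0 else Fs γ k :|: [set y | prec γ y b && topok γ y k].
Proof. by rewrite /Fs rev_rcons /= revK. Qed.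

Lemma rcons_eq_cat (γ α β1 : seq Sigma) b b' : rcons γ b = α ++ b' :: β1 ->
  (β1 = [::] /\ α = γ /\ b' = b) \/ (exists β1', β1 = rcons β1' b /\ γ = α ++ b' :: β1').
Proof.
case/lastP: β1 => [|β1 c].
  by rewrite cats1 => /rcons_inj [-> ->]; left.
rewrite -rcons_cons -rcons_cat => /rcons_inj [-> ->]; right; by exists β1.
Qed.

Lemma Fs_spec γ k y : y \in Fs γ k <-> exists α b β1,
  [/\ γ = α ++ b :: β1, comp b != k, all (fun c => comp c != k) β1, prec α y b & topok α y k].
Proof.
elim/last_ind: γ => [|γ b IH].
  rewrite /Fs /= in_set0; split => // [[α [b [β1 [E _ _ _ _]]]]]; by case: α E.
rewrite Fs_rcons; case: eqP => Hb.
  rewrite in_set0; split => // [[α [b' [β1 [E Hb' Hall _ _]]]]].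
  case: (rcons_eq_cat E) => [[_ [_ Eb]]|[β1' [Eβ _]]].
    by move: Hb'; rewrite Eb Hb eqxx.
  by move: Hall; rewrite Eβ all_rcons Hb eqxx.
rewrite in_setU in_set; split.
  case/orP => [/IH [α [b' [β1 [E H1 H2 H3 H4]]]] | /andP [H3 H4]].
    exists α, b', (rcons β1 b); split => //.
      by rewrite E rcons_cat.
    by rewrite all_rcons H2 andbT; apply/eqP.
  exists γ, b, [::]; split => //; [by rewrite cats1 | by apply/eqP].
move=> [α [b' [β1 [E H1 H2 H3 H4]]]].
case: (rcons_eq_cat E) => [[Eβ [Eα Eb]]|[β1' [Eβ Eγ]]].
  by subst; rewrite H3 H4 orbT.
apply/orP; left; apply/IH; exists α, b', β1'; split => //.
by move: H2; rewrite Eβ all_rcons => /andP [].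
Qed.

Definition Good w := forall γ a δ, w = γ ++ a :: δ -> a \notin Fs γ (comp a).

Hypothesis Hirr : forall w a, ~~ prec w a a.

Lemma red_iff w : red comp prec (bowtie kind comp P) w <-> bowtie kind comp P w /\ Good w.
Proof.
split.
  case=> Lw Hmin; split => // γ a δ Ew; apply/negP => /Fs_spec.
  move=> [α [b [β1 [Eγ Hb Hall Hp Ht]]]]; subst γ w.
  have Lw' : bowtie kind comp P (α ++ (b :: β1) ++ a :: δ) by rewrite -catA in Lw.
  have Hz : all (fun c => comp c != comp a) (b :: β1) by rewrite /= Hb.
  have [γ' [Lu Hproj]] := move_front Lw' Hz Ht.
  have := Hmin _ Lu.
  have Hproj' : forall i, proj comp i (α ++ a :: γ') = proj comp i ((α ++ b :: β1) ++ a :: δ).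
    by move=> i; rewrite Hproj -catA.
  move=> /(_ (proj_equivI Hproj')).
  have Hle : word_le prec (α ++ a :: γ') ((α ++ b :: β1) ++ a :: δ).
    right; exists α, a, γ', b, (β1 ++ a :: δ); split => //; by rewrite -catA.
  move=> /(_ Hle); rewrite -catA /= => /catl_inj [Eab _].
  by move: Hb; rewrite Eab eqxx.
case=> Lw Hg; split => // u Lu Hequ Hle.
have Hsz := equivI_size Hequ; have Hpr := equivI_proj Hequ.
case: Hle => [Hpre | [al [a [be [b [ga [Eu [Ew Hp]]]]]]]].
  by move: Hpre; rewrite prefixE Hsz take_size => /eqP.
exfalso; subst u w.
have := Hpr (comp a); rewrite /proj !filter_cat /= eqxx => /catl_inj.
case: eqP => Hbj.
  case=> Eab; move: Hp; rewrite Eab; by rewrite (negbTE (Hirr _ _)).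
move/esym => Hga.
have [β1 [δ [Ega Hβ1 _ _]]] := filter_cons_split Hga.
have Hall := filter_nil_all Hβ1.
apply: (negP (Hg (al ++ b :: β1) a δ _)).
  by rewrite Ega -catA.
apply/Fs_spec; exists al, b, β1; split => //; first by apply/eqP.
rewrite /topok; case Ka: (kind a) => //.
have := L_valid Lu; rewrite runc_cat /topc.
case: (runc [::] al) => [σ|] //=; rewrite /cstep Ka.
by case: σ => // k σ; case: eqP => // ->.
Qed.

Lemma vrun_rcons (A : vpa Sigma) (c c1 c2 : config A) x a :
  vrun kind c x c1 -> vstep kind c1 a c2 -> vrun kind c (rcons x a) c2.
Proof.
elim => [c0|c0 b c0' w c0'' Hs Hr IH] Hs2 /=.
  by apply: RunCons Hs2 (RunNil _ _).
exact: RunCons Hs (IH Hs2).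
Qed.

Lemma vrun_nil_inv (A : vpa Sigma) (c c' : config A) : vrun kind c [::] c' -> c' = c.
Proof. by move=> H; inversion H. Qed.

Lemma vrun_cons_inv (A : vpa Sigma) (c c' : config A) a x : vrun kind c (a :: x) c' ->
  exists c1, vstep kind c a c1 /\ vrun kind c1 x c'.
Proof. by move=> H; inversion H; subst; eexists; split; eauto. Qed.

Lemma vstep_call_inv (A : vpa Sigma) (q : vst A) s a c' : vstep kind (q, s) a c' -> kind a = Call ->
  exists q' g, c' = (q', g :: s) /\ dcall q a q' g.
Proof. move=> H Ka; inversion H; subst; try congruence; do 2 eexists; split; [reflexivity|eassumption]. Qed.

Lemma vstep_ret_inv (A : vpa Sigma) (q : vst A) g s a c' : vstep kind (q, g :: s) a c' -> kind a = Ret ->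
  exists q', c' = (q', s) /\ dret q a (Some g) q'.
Proof. move=> H Ka; inversion H; subst; try congruence; eexists; split; [reflexivity|eassumption]. Qed.

Lemma vstep_int_inv (A : vpa Sigma) (q : vst A) s a c' : vstep kind (q, s) a c' -> kind a = Int ->
  exists q', c' = (q', s) /\ dint q a q'.
Proof. move=> H Ka; inversion H; subst; try congruence; eexists; split; [reflexivity|eassumption]. Qed.

Variable Aord : vpa Sigma.
Variable ord : vst Aord -> rel Sigma.
Hypothesis Hord : forall w q0 (c : config Aord), vinit q0 -> vrun kind (q0, [::]) w c -> prec w = ord c.1.
Variable Af : 'I_n -> vpa Sigma.

Definition Qs := {dffun forall i, vst (Af i)}.
Definition Gs := {i : 'I_n & vgam (Af i)}.
Definition St := (vst Aord * Qs * {ffun 'I_n -> {set Sigma}} * option 'I_n)%type.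
Definition Gm := (vgam Aord * Gs * option 'I_n)%type.

Definition topokS (t : option 'I_n) y k := if kind y is Ret then t == Some k else true.

Definition Fupd (F : {ffun 'I_n -> {set Sigma}}) qo t a : {ffun 'I_n -> {set Sigma}} :=
  [ffun k => if comp a == k then set0 else F k :|: [set y | ord qo y a && topokS t y k]].

Definition same_except (qs qs' : Qs) j := [forall k, (k != j) ==> (qs' k == qs k)].

Definition cdcall (c : St) (a : Sigma) (c' : St) (g : Gm) : bool :=
  let: (qo, qs, F, t) := c in let: (qo', qs', F', t') := c' in let: (go, s, st) := g in
  [&& dcall qo a qo' go, tag s == comp a, dcall (qs (tag s)) a (qs' (tag s)) (tagged s),
      same_except qs qs' (tag s), a \notin F (comp a), F' == Fupd F qo t a,
      t' == Some (comp a) & st == t].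

Definition cdint (c : St) (a : Sigma) (c' : St) : bool :=
  let: (qo, qs, F, t) := c in let: (qo', qs', F', t') := c' in
  [&& dint qo a qo', dint (qs (comp a)) a (qs' (comp a)),
      same_except qs qs' (comp a), a \notin F (comp a), F' == Fupd F qo t a & t' == t].

Definition cdret (c : St) (a : Sigma) (og : option Gm) (c' : St) : bool :=
  let: (qo, qs, F, t) := c in let: (qo', qs', F', t') := c' in
  if og is Some (go, s, st) then
  [&& dret qo a (Some go) qo', tag s == comp a, dret (qs (tag s)) a (Some (tagged s)) (qs' (tag s)),
      same_except qs qs' (tag s), a \notin F (comp a), F' == Fupd F qo t a & t' == st]
  else false.

Definition cinit : pred St := fun c => let: (qo, qs, F, t) := c in
  [&& vinit qo, [forall i, vinit (qs i)], F == [ffun=> set0] & t == None].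

Definition cfinal : pred St := fun c => let: (qo, qs, F, t) := c in [forall i, vfinal (qs i)].

Definition Acomb : vpa Sigma := @VPA Sigma St Gm cinit cfinal cdcall cdret cdint.

Definition getg i (s : Gs) : option (vgam (Af i)) :=
  match tag s =P i with
  | ReflectT e => Some (ecast k (vgam (Af k)) e (tagged s))
  | ReflectF _ => None
  end.

Lemma getg_same s : getg (tag s) s = Some (tagged s).
Proof. rewrite /getg; case: (tag s =P tag s) => [e|//]; by rewrite (eq_axiomK e). Qed.

Lemma getg_other i s : tag s != i -> getg i s = None.
Proof. rewrite /getg; case: (tag s =P i) => // e; by rewrite e eqxx. Qed.

Definition upd (qs : Qs) j (x : vst (Af j)) : Qs :=
  @finfun _ (fun k => vst (Af k))
    (fun k => if (j =P k) is ReflectT e then ecast k (vst (Af k)) e x else qs k).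

Arguments upd : clear implicits.

Lemma upd_same qs j x : upd qs j x j = x.
Proof. rewrite /upd ffunE; case: (j =P j) => [e|//]; by rewrite (eq_axiomK e). Qed.

Lemma upd_other qs j x k : j != k -> upd qs j x k = qs k.
Proof. rewrite /upd ffunE; case: (j =P k) => // e; by rewrite e eqxx. Qed.

Lemma upd_except qs j x : same_except qs (upd qs j x) j.
Proof. apply/forallP => k; apply/implyP => Hk; by rewrite upd_other // eq_sym. Qed.

Definition stkI i (Sk : seq Gm) : seq (vgam (Af i)) := pmap (fun x : Gm => getg i x.1.2) Sk.
Definition stkO (Sk : seq Gm) : seq (vgam Aord) := map (fun x : Gm => x.1.1) Sk.
Definition tags (Sk : seq Gm) : seq 'I_n := map (fun x : Gm => tag x.1.2) Sk.
Fixpoint stk_ok (t : option 'I_n) (Sk : seq Gm) : bool :=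
  match Sk with
  | [::] => t == None
  | x :: Sk' => (t == Some (tag x.1.2)) && stk_ok x.2 Sk'
  end.

Definition Inv (γ : seq Sigma) (C : config Acomb) : Prop :=
  let: ((qo, qs, F, t), Sk) := C in
  [/\ exists q0, vinit q0 /\ vrun kind (q0, [::]) γ ((qo, stkO Sk) : config Aord),
      forall k, F k = Fs γ k,
      runc [::] γ = Some (tags Sk),
      stk_ok t Sk &
      forall i, exists q0, vinit q0 /\ vrun kind (q0, [::]) (proj comp i γ) ((qs i, stkI i Sk) : config (Af i))].

Lemma topc_stk γ Sk t : runc [::] γ = Some (tags Sk) -> stk_ok t Sk -> topc γ = t.
Proof.
rewrite /topc => ->; case: Sk => [|x Sk] /=; first by move/eqP.
by case/andP => /eqP.
Qed.

Lemma Fupd_Fs γ (F : {ffun 'I_n -> {set Sigma}}) qo t a q0 Sk : vinit q0 -> vrun kind (q0, [::]) γ ((qo, Sk) : config Aord) ->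
  topc γ = t -> (forall k, F k = Fs γ k) -> forall k, Fupd F qo t a k = Fs (rcons γ a) k.
Proof.
move=> Hq0 Ro Ht HF k; rewrite ffunE Fs_rcons HF; case: eqP => // _.
congr (_ :|: _); apply/setP => y; rewrite !inE (Hord Hq0 Ro) /topok /topokS Ht //.
Qed.

Lemma proj_rcons i γ a : proj comp i (rcons γ a) =
  if comp a == i then rcons (proj comp i γ) a else proj comp i γ.
Proof. by rewrite /proj filter_rcons. Qed.

Lemma comb_step γ (C C' : config Acomb) a : Inv γ C -> vstep kind C a C' ->
  Inv (rcons γ a) C' /\ a \notin Fs γ (comp a).
Proof.
move=> HI Hs; case: Hs HI => [q b q' g Sk Ka Hd|q b q' g Sk Ka Hd|q b q' Ka Hd|q b q' Sk Ka Hd] HI.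
- case: q Hd HI => [[[qo qs] F] t] Hd HI; case: q' Hd => [[[qo' qs'] F'] t'] Hd.
  case: g Hd => [[go s'] st] Hd; rewrite /= in Hd.
  case/and5P: Hd => H1 H2 H3 H4 /and4P [H5 H6 H7 H8].
  move: HI; rewrite /Inv => -[[q0 [Hq0 Ro]] HF Rc Sok HA].
  have Ht := topc_stk Rc Sok.
  split; last by rewrite -HF.
  split.
  + exists q0; split => //; apply: vrun_rcons Ro _; exact: (StepCall _ Ka H1).
  + move=> k; rewrite (eqP H6); exact: Fupd_Fs Hq0 Ro Ht HF k.
  + by rewrite runc_rcons Rc /cstep Ka /= (eqP H2).
  + by rewrite /= (eqP H7) (eqP H2) eqxx (eqP H8).
  + move=> i; have [qi0 [Hqi Ri]] := HA i; exists qi0; split => //.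
    rewrite proj_rcons; case: (eqVneq (tag s') i) => [Ei|Ni].
      subst i; rewrite [comp b == _]eq_sym H2; apply: vrun_rcons Ri _.
      rewrite /stkI /= getg_same; exact: (StepCall _ Ka H3).
    have Hq : qs' i = qs i by move/forallP: H4 => /(_ i); rewrite eq_sym Ni /= => /eqP.
    by rewrite -(eqP H2) (negbTE Ni) /stkI /= getg_other // Hq.
- case: q Hd HI => [[[qo qs] F] t] Hd HI; case: q' Hd => [[[qo' qs'] F'] t'] Hd.
  case: g Hd HI => [[go s'] st] Hd HI; rewrite /= in Hd.
  case/and5P: Hd => H1 H2 H3 H4 /and3P [H5 H6 H7].
  move: HI; rewrite /Inv => -[[q0 [Hq0 Ro]] HF Rc Sok HA].
  have Ht := topc_stk Rc Sok.
  split; last by rewrite -HF.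
  split.
  + exists q0; split => //; apply: vrun_rcons Ro _; exact: (StepRet _ Ka H1).
  + move=> k; rewrite (eqP H6); exact: Fupd_Fs Hq0 Ro Ht HF k.
  + by rewrite runc_rcons Rc /cstep Ka /= H2.
  + by move: Sok => /= /andP [_]; rewrite (eqP H7).
  + move=> i; have [qi0 [Hqi Ri]] := HA i; exists qi0; split => //.
    rewrite proj_rcons; case: (eqVneq (tag s') i) => [Ei|Ni].
      subst i; rewrite [comp b == _]eq_sym H2; apply: vrun_rcons Ri _.
      rewrite /stkI /= getg_same; exact: (StepRet _ Ka H3).
    have Hq : qs' i = qs i by move/forallP: H4 => /(_ i); rewrite eq_sym Ni /= => /eqP.
    move: Ri; rewrite -(eqP H2) (negbTE Ni) /stkI /= getg_other // Hq //.
- by case: q q' Hd HI => [[[? ?] ?] ?] [[[? ?] ?] ?].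
- case: q Hd HI => [[[qo qs] F] t] Hd HI; case: q' Hd => [[[qo' qs'] F'] t'] Hd.
  rewrite /= in Hd.
  case/and5P: Hd => H1 H2 H3 H4 /andP [H5 H6].
  move: HI; rewrite /Inv => -[[q0 [Hq0 Ro]] HF Rc Sok HA].
  have Ht := topc_stk Rc Sok.
  split; last by rewrite -HF.
  split.
  + exists q0; split => //; apply: vrun_rcons Ro _; exact: (StepInt _ Ka H1).
  + move=> k; rewrite (eqP H5); exact: Fupd_Fs Hq0 Ro Ht HF k.
  + by rewrite runc_rcons Rc /cstep Ka.
  + by rewrite (eqP H6).
  + move=> i; have [qi0 [Hqi Ri]] := HA i; exists qi0; split => //.
    rewrite proj_rcons; case: (eqVneq (comp b) i) => [Ei|Ni].
      subst i; rewrite ?eqxx; apply: vrun_rcons Ri _; exact: (StepInt _ Ka H2).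
    have Hq : qs' i = qs i by move/forallP: H3 => /(_ i); rewrite eq_sym Ni /= => /eqP.
    by rewrite ?(negbTE Ni) Hq.
Qed.

Lemma comb_run (C C' : config Acomb) x : vrun kind C x C' -> forall γ, Inv γ C ->
  Inv (γ ++ x) C' /\ (forall γ' a δ', x = γ' ++ a :: δ' -> a \notin Fs (γ ++ γ') (comp a)).
Proof.
elim => [c|c a c' w c'' Hs Hr IH] γ HI.
  split; first by rewrite cats0.
  by move=> [|? ?] ? ?.
have [HI' Ha] := comb_step HI Hs; have [HI'' Hg] := IH _ HI'.
split; first by rewrite -cat_rcons.
move=> [|b γ'] a' δ' /=.
  by case=> <- _; rewrite cats0.
case=> <- Ew; rewrite -cat_rcons; exact: Hg Ew.
Qed.

Lemma Inv_init (c : St) : cinit c -> Inv [::] ((c, [::]) : config Acomb).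
Proof.
case: c => [[[qo qs] F] t] /=; case/and4P => H1 /forallP H2 /eqP H3 /eqP H4.
split => //.
- by exists qo; split => //; exact: RunNil.
- by move=> k; rewrite H3 ffunE.
- by rewrite H4.
- by move=> i; exists (qs i); split => //; exact: RunNil.
Qed.

Hypothesis Hcompl : forall (c : config Aord) a, exists c', vstep kind c a c'.

Lemma comb_build x : forall γ qo qs F t Sk, Inv γ ((qo, qs, F, t), Sk) ->
  runc [::] (γ ++ x) <> None ->
  (forall γ' a δ', x = γ' ++ a :: δ' -> a \notin Fs (γ ++ γ') (comp a)) ->
  (forall i, exists c, vrun kind ((qs i, stkI i Sk) : config (Af i)) (proj comp i x) c /\ vfinal c.1) ->
  exists C', vrun kind (((qo, qs, F, t), Sk) : config Acomb) x C' /\ cfinal C'.1.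
Proof.
elim: x => [|a x IH] γ qo qs F t Sk HI Hr Hg HA.
  exists ((qo, qs, F, t), Sk); split; first exact: RunNil.
  apply/forallP => i; have [c [Rc Fc]] := HA i.
  by move: Rc => /vrun_nil_inv Ec; rewrite Ec in Fc.
have HI0 := HI; move: HI0; rewrite /Inv => -[[q0 [Hq0 Ro]] HF Rc Sok HA0].
have Ha : a \notin F (comp a) by have := Hg [::] a x erefl; rewrite cats0 -HF.
have [co' Hso] := Hcompl (qo, stkO Sk) a.
have Hstep : exists C', vstep kind (((qo, qs, F, t), Sk) : config Acomb) a C' /\
    (forall i, exists c, vrun kind ((C'.1.1.1.2 i, stkI i C'.2) : config (Af i)) (proj comp i x) c
                          /\ vfinal c.1).
  case Ka: (kind a).
  - have [c [Rj Fj]] := HA (comp a).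
    move: Rj; rewrite /proj /= eqxx => /vrun_cons_inv [c1 [Hs1 Rj]].
    have [qj' [gj [Ec1 Hdj]]] := vstep_call_inv Hs1 Ka; subst c1.
    have [qo' [go [Eco Hdo]]] := vstep_call_inv Hso Ka; subst co'.
    exists ((qo', upd qs (comp a) qj', Fupd F qo t a, Some (comp a)),
            (go, Tagged (fun k => vgam (Af k)) gj, t) :: Sk).
    split.
      apply: StepCall Ka _; rewrite /=.
      apply/and5P; split => //; first by rewrite upd_same.
        exact: upd_except.
      by apply/and4P; split.
    move=> i /=; case: (eqVneq (comp a) i) => [Ei|Ni].
      subst i; exists c; split => //.
      by rewrite upd_same /stkI /= (getg_same (Tagged (fun k => vgam (Af k)) gj)).
    have [c' [Ri Fi]] := HA i; exists c'; split => //.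
    move: Ri; rewrite /proj /= (negbTE Ni) upd_other // /stkI /= getg_other //.
  - move: Hr; rewrite runc_cat Rc /= /cstep Ka.
    case: Sk HI HA Rc Sok Ro Hso HA0 => [|[[go' [i' gi']] st] Sk0] HI HA Rc Sok Ro Hso HA0 //=.
    case: ifP => // /eqP Ei _.
    have [qo' [Eco Hdo]] := vstep_ret_inv Hso Ka; subst co'.
    have [c [Rj Fj]] := HA i'.
    have Ei' : (comp a == i') by rewrite Ei.
    move: Rj; rewrite /proj /= Ei' /stkI /=.
    rewrite (getg_same (Tagged (fun k => vgam (Af k)) gi')) /= => /vrun_cons_inv [c1 [Hs1 Rj]].
    have [qj' [Ec1 Hdj]] := vstep_ret_inv Hs1 Ka; subst c1.
    exists ((qo', upd qs i' qj', Fupd F qo t a, st), Sk0).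
    split.
      apply: StepRet Ka _; rewrite /=.
      apply/and5P; split => //; first by rewrite Ei.
        by rewrite upd_same.
        exact: upd_except.
      by apply/and3P; split.
    move=> i /=; case: (eqVneq i' i) => [Eii|Ni].
      by subst i; exists c; split => //; rewrite upd_same.
    have [c' [Ri Fi]] := HA i; exists c'; split => //.
    have Ni' : (comp a == i) = false by rewrite -Ei (negbTE Ni).
    move: Ri; rewrite /proj /= Ni' upd_other // /stkI /= getg_other //.
  - have [c [Rj Fj]] := HA (comp a).
    move: Rj; rewrite /proj /= eqxx => /vrun_cons_inv [c1 [Hs1 Rj]].
    have [qj' [Ec1 Hdj]] := vstep_int_inv Hs1 Ka; subst c1.
    have [qo' [Eco Hdo]] := vstep_int_inv Hso Ka; subst co'.
    exists ((qo', upd qs (comp a) qj', Fupd F qo t a, t), Sk).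
    split.
      apply: StepInt Ka _; rewrite /=.
      apply/and5P; split => //; first by rewrite upd_same.
        exact: upd_except.
      by apply/andP; split.
    move=> i /=; case: (eqVneq (comp a) i) => [Ei|Ni].
      by subst i; exists c; split => //; rewrite upd_same.
    have [c' [Ri Fi]] := HA i; exists c'; split => //.
    move: Ri; rewrite /proj /= (negbTE Ni) upd_other //.
have [[[[[qo' qs'] F'] t'] Sk'] [Hs HA']] := Hstep.
have [HI' _] := comb_step HI Hs.
have Hr' : runc [::] (rcons γ a ++ x) <> None by rewrite cat_rcons.
have Hg' : forall γ' b δ', x = γ' ++ b :: δ' -> b \notin Fs (rcons γ a ++ γ') (comp b).
  by move=> γ' b δ' Ex; rewrite cat_rcons; apply: (Hg (a :: γ')); rewrite Ex.
have [C'' [Hr'' Hf]] := IH (rcons γ a) qo' qs' F' t' Sk' HI' Hr' Hg' HA'.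
by exists C''; split => //; exact: RunCons Hs Hr''.
Qed.

End Comb.


Theorem theorem4p4 (Sigma : finType) (kind : Sigma -> vkind) (n : nat)
  (comp : Sigma -> 'I_n) (prec : seq Sigma -> rel Sigma)
  (P : 'I_n -> seq Sigma -> Prop) :
  vp_contextual_order kind prec ->
  (forall i w, P i w -> all (fun a => comp a == i) w) ->
  (forall i w, P i w -> well_matched kind w) ->
  (forall i, is_vpl kind (P i)) ->
  is_vpl kind (red comp prec (bowtie kind comp P)).
Proof.
move=> [Hco [Aord [ord [Hdet [[[qo0 Hqo0] Hcompl] [Hordt Hord]]]]]] Hcomp Hwm HP.
have Hirr : forall w a, ~~ prec w a a by move=> w a; case: (Hco w) => H _; exact: H a.
pose Af := fun i => proj1_sig (constructive_indefinite_description _ (HP i)).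
have HAf : forall i w, P i w <-> vaccepts kind (Af i) w :=
  fun i => proj2_sig (constructive_indefinite_description _ (HP i)).
exists (Acomb kind comp ord Af) => w.
rewrite (red_iff comp Hwm Hirr); split.
  case=> Lw Hg; have Hval := L_valid Hwm Lw; case: Lw => Hsh _.
  have Hex : forall i, exists q0 : vst (Af i), vinit q0 /\
      exists c, vrun kind ((q0, [::]) : config (Af i)) (proj comp i w) c /\ vfinal c.1.
    move=> i; have [q0 [c [H1 [H2 H3]]]] := (HAf i _).1 (Hsh i).
    by exists q0; split => //; exists c.
  have [qs0 Hqs0] := fin_all_exists Hex.
  pose qs : Qs Af := @finfun _ (fun i => vst (Af i)) qs0.
  have HI := @Inv_init _ kind _ comp prec _ ord Af (qo0, qs, [ffun=> set0], None).
  have Hin : cinit ((qo0, qs, [ffun=> set0], None) : St Aord Af).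
    apply/and4P; split => //; apply/forallP => i; rewrite ffunE; by case: (Hqs0 i).
  have HA : forall i : 'I_n, exists c : config (Af i), vrun kind ((qs i, stkI (Aord:=Aord) i [::]) : config (Af i)) (proj comp i w) c
                               /\ vfinal c.1.
    move=> i; have [_ [c [Rc Fc]]] := Hqs0 i; exists c; split => //.
    by rewrite ffunE.
  have [C' [Hr Hf]] := comb_build Hord Hcompl (HI Hin) Hval (fun γ' a δ' E => Hg γ' a δ' E) HA.
  by exists (qo0, qs, [ffun=> set0], None), C'; split.
move=> [[[[qo qs] F] t] [C [Hin [Hrun Hfin]]]].
have [HI Hg] := comb_run Hord Hrun (Inv_init kind comp prec ord Hin).
case: C HI Hrun Hfin => [[[[qo' qs'] F'] t'] Sk] HI Hrun Hfin.
move: HI; rewrite /Inv /= => -[_ _ Rc _ HA].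
split; last by move=> γ a δ E; exact: Hg γ a δ E.
apply: valid_L; last by rewrite Rc.
move=> i; apply/(HAf i); have [q0 [Hq0 Ri]] := HA i.
exists q0, (qs' i, stkI i Sk); split => //; split => //.
by move/forallP: Hfin => /(_ i).
Qed.
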